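(* Let $\mathcal C$ be a concept hierarchy, $r_1,r_2,\epsilon\in[0,1]$ with $r_1\le r_2(1-\epsilon)$, $m$ a positive integer, and let $\mathcal H$ be the network defined below with a fixed failed set $F$ satisfying the stated constraint. Then $\mathcal H$ $(r_1,r_2)$-recognizes $\mathcal C$: for every $B\subseteq C_0$ presented at time 0, (1) if $c\in supp_{r_2}(B)$ then at least $m(1-\epsilon)$ of the neurons $v\in reps(c)$ fire at time $level(c)$, and (2) if $c\notin supp_{r_1}(B)$ then no neuron $v\in reps(c)$ fires at time $level(c)$.
   Context: Concept hierarchies: fix positive integers $\ell_{max},n,k$. A universal set $D$ of concepts is partitioned into disjoint sets $D_0,\dots,D_{\ell_{max}}$ with $|D_0|=n$; $level(c)=\ell$ for $c\in D_\ell$. A concept hierarchy $\mathcal C$ consists of $C\subseteq D$, with $C_\ell=C\cap D_\ell$, and for each $c\in C_\ell$ with $1\le\ell\le\ell_{max}$ a set $children(c)\subseteq C_{\ell-1}$, such that $|C_{\ell_{max}}|=k$, $|children(c)|=k$ for all such $c$, and $children(c)\cap children(c')=\emptyset$ for distinct $c,c'\in C_\ell$. For $B\subseteq D_0$ and $r\in[0,1]$: $B(0)=B\cap C_0$; for $1\le\ell\le\ell_{max}$, $B(\ell)=\{c\in C_\ell:|children(c)\cap B(\ell-1)|\ge rk\}$; $supp_r(B)=\bigcup_{\ell}B(\ell)$. Network $\mathcal H$: neurons partitioned into layers $N_0,\dots,N_{\ell_{max}}$. Each $c\in D_0$ has a set $reps(c)$ of $m$ neurons in $N_0$, each $c\in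 C$ with $level(c)\ge1$ a set $reps(c)$ of $m$ neurons in $N_{level(c)}$, all pairwise disjoint. For $u\in N_{\ell-1}$, $v\in N_\ell$: $w(u,v)=1$ iff $v\in reps(c)$ and $u\in reps(c')$ for a child $c'$ of $c$, else $0$. Threshold $\tau=r_2km(1-\epsilon)$. A fixed set $F$ of neurons is failed (failed neurons never fire), such that for every concept $c$ at least $m(1-\epsilon)$ neurons of $reps(c)$ are not in $F$. Input $B\subseteq C_0$ presented at time 0: a layer-0 neuron fires at time 0 iff it is in $\bigcup_{b\in B}reps(b)\setminus F$, and no layer-0 neuron fires at any other time. A non-failed $v\in N_\ell$, $\ell\ge1$, does not fire at time 0 and fires at time $t\ge1$ iff $\sum_{u\in N_{\ell-1}}w(u,v)x_u(t-1)\ge\tau$, where $x_u(s)\in\{0,1\}$ indicates whether $u$ fires at time $s$. *)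

(* Defs.v *)
From mathcomp Require Import all_boot all_order all_algebra.
Set Implicit Arguments. Unset Strict Implicit. Unset Printing Implicit Defensive.
Import Order.TTheory GRing.Theory Num.Theory.
Local Open Scope ring_scope.

Section ConceptHierarchy.
Variables (D : finType) (level : D -> nat) (lmax n k : nat).

Definition universal_ok : Prop :=
  (forall c, (level c <= lmax)%N) /\ #|[set c | level c == 0%N]| = n.

(* A concept hierarchy: C ⊆ D together with [children] (only meaningful for
   c ∈ C with level c >= 1). *)
Definition is_concept_hierarchy (C : {set D}) (children : D -> {set D}) : Prop :=
  [/\ #|[set c in C | level c == lmax]| = k,
      (forall c, c \in C -> (1 <= level c)%N ->
         children c \subset [set c' in C | level c' == (level c).-1]),
      (forall c, c \in C -> (1 <= level c)%N -> #|children c| = k) &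
      (forall c c', c \in C -> c' \in C -> (1 <= level c)%N ->
         level c = level c' -> c != c' -> [disjoint children c & children c'])].

Variables (C : {set D}) (children : D -> {set D}).

Fixpoint Bl (R : numDomainType) (r : R) (B : {set D}) (l : nat) : {set D} :=
  match l with
  | 0%N => B :&: [set c in C | level c == 0%N]
  | l'.+1 => [set c in C | (level c == l'.+1) &&
                (r * k%:R <= (#|children c :&: Bl r B l'|)%:R)]
  end.

Definition supp (R : numDomainType) (r : R) (B : {set D}) : {set D} :=
  \bigcup_(l < lmax.+1) Bl r B l.

End ConceptHierarchy.

Section Network.
Variables (D : finType) (level : D -> nat) (lmax : nat)
          (C : {set D}) (children : D -> {set D}).
Variables (N : finType) (layer : N -> nat) (reps : D -> {set N}) (m : nat).

Definition has_reps (c : D) : bool := (level c == 0%N) || (c \in C).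

Definition network_ok : Prop :=
  [/\ (forall u, (layer u <= lmax)%N),
      (forall c, has_reps c -> #|reps c| = m),
      (forall c, has_reps c -> reps c \subset [set u | layer u == level c]) &
      (forall c c', has_reps c -> has_reps c' -> c != c' ->
         [disjoint reps c & reps c'])].

Definition weight (u v : N) : nat :=
  [exists c, [&& c \in C, (1 <= level c)%N, v \in reps c &
     [exists c', (c' \in children c) && (u \in reps c')]]].

Variables (R : numDomainType) (tau : R) (F : {set N}) (B : {set D}).

Fixpoint fires (t : nat) : N -> bool :=
  match t with
  | 0%N => fun v => [&& layer v == 0%N, v \notin F &
                       [exists b in B, v \in reps b]]
  | t'.+1 => fun v => [&& layer v != 0%N, v \notin F &
       tau <= (\sum_(u | layer u == (layer v).-1) (weight u v * fires t' u))%N%:R]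
  end.

End Network.

(* Main.v *)
Require Import Defs.
From mathcomp Require Import all_boot all_order all_algebra.
From mathcomp Require Import ring.
Import Order.TTheory GRing.Theory Num.Theory.
Local Open Scope ring_scope.

Section Pf.
Variables (R : realFieldType) (lmax n k : nat) (D : finType) (level : D -> nat)
  (C : {set D}) (children : D -> {set D})
  (HC : is_concept_hierarchy level lmax k C children)
  (r1 r2 eps : R) (Heps : 0 <= eps <= 1) (Hr12 : r1 <= r2 * (1 - eps))
  (m : nat) (Hm : (0 < m)%N)
  (N : finType) (layer : N -> nat) (reps : D -> {set N})
  (HN : network_ok level lmax C layer reps m)
  (F : {set N})
  (HF : forall c, has_reps level C c ->
          m%:R * (1 - eps) <= (#|reps c :\: F|)%:R)
  (B : {set D}) (HB : B \subset [set c in C | level c == 0%N]).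

Let tau := r2 * k%:R * m%:R * (1 - eps).
Let fr t v := fires level C children layer reps tau F B t v.

Lemma reps_uniq {c c' v} : has_reps level C c -> has_reps level C c' ->
  v \in reps c -> v \in reps c' -> c = c'.
Proof.
case: HN => _ _ _ Hd hc hc' h1 h2.
apply/eqP; apply/negPn/negP => ne.
by rewrite (disjointFr (Hd _ _ hc hc' ne) h1) in h2.
Qed.

Lemma hasC {c} : c \in C -> has_reps level C c.
Proof. by move=> h; rewrite /has_reps h orbT. Qed.

Lemma layer_reps {c u} : has_reps level C c -> u \in reps c -> layer u = level c.
Proof.
case: HN => _ _ Hs _ hc hu.
by have := subsetP (Hs c hc) u hu; rewrite inE => /eqP.
Qed.

Lemma children_in {c c'} : c \in C -> (1 <= level c)%N -> c' \in children c ->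
  c' \in C /\ level c' = (level c).-1.
Proof.
case: HC => _ Hs _ _ hc hl hc'.
by have := subsetP (Hs c hc hl) c' hc'; rewrite inE => /andP[-> /eqP ->].
Qed.

Lemma weight_eq {c v} u : c \in C -> (1 <= level c)%N -> v \in reps c ->
  weight level C children reps u v =
  [exists c', (c' \in children c) && (u \in reps c')] :> nat.
Proof.
move=> hc hl hv; rewrite /weight; congr nat_of_bool.
apply/existsP/idP.
- case=> c0 /and4P[hc0 hl0 hv0 he].
  by rewrite -(reps_uniq (hasC hc0) (hasC hc) hv0 hv).
- by move=> he; exists c; rewrite hc hl hv he.
Qed.

Lemma sum_eq {c v} t : c \in C -> (1 <= level c)%N -> v \in reps c ->
  (\sum_(u | layer u == (layer v).-1)
      (weight level C children reps u v * fr t u))%N =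
  (\sum_(c' in children c) #|[set u in reps c' | fr t u]|)%N.
Proof.
move=> hc hl hv.
have lv : layer v = level c by apply: layer_reps (hasC hc) hv.
have card_eq c' : c' \in children c -> #|[set u in reps c' | fr t u]| =
   (\sum_(u | layer u == (layer v).-1) ((u \in reps c') && fr t u))%N.
  move=> hc'; have [hc'C hlc'] := children_in hc hl hc'.
  rewrite -sum1_card big_mkcond /= (bigID (fun u => layer u == (layer v).-1)) /=.
  rewrite [X in (_ + X)%N]big1 ?addn0; last first.
    move=> u hu; rewrite inE; case hr: (u \in reps c') => //=.
    by rewrite (layer_reps (hasC hc'C) hr) hlc' lv eqxx in hu.
  by apply: eq_bigr => u _; rewrite inE; case: (_ && _).
rewrite (eq_bigr _ card_eq) -exchange_big /=.
apply: eq_bigr => u _.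
rewrite (weight_eq u hc hl hv).
case: existsP => [[c0 /andP[h0 hu]] | hno].
- rewrite (bigD1 c0) //= hu mul1n big1 ?addn0 //.
  move=> c1 /andP[h1 ne]; case hu1: (u \in reps c1) => //=.
  have [h0C _] := children_in hc hl h0; have [h1C _] := children_in hc hl h1.
  by rewrite (reps_uniq (hasC h1C) (hasC h0C) hu1 hu) eqxx in ne.
- rewrite mul0n big1 // => c1 h1; case hu1: (u \in reps c1) => //.
  by exfalso; apply: hno; exists c1; rewrite h1 hu1.
Qed.

Lemma Bl_level (r : R) l c : c \in Bl level k C children r B l -> level c = l /\ c \in C.
Proof.
case: l => [|l] /=; rewrite !inE.
- by case/andP=> _ /andP[-> /eqP ->].
- by case/andP=> -> /andP[/eqP -> _].
Qed.

Lemma part1 l : forall c, c \in C -> level c = l ->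
  c \in Bl level k C children r2 B l ->
  m%:R * (1 - eps) <= (#|[set v in reps c | fr l v]|)%:R.
Proof.
have e0 : 0 <= 1 - eps by rewrite subr_ge0; case/andP: Heps.
elim: l => [|l IH] c hc hl hB.
- apply: le_trans (HF c (hasC hc)) _; rewrite ler_nat; apply: subset_leq_card.
  apply/subsetP => v; rewrite !inE => /andP[hF hv]; rewrite hv /fr /=.
  rewrite (layer_reps (hasC hc) hv) hl eqxx hF /=.
  apply/existsP; exists c; rewrite hv andbT.
  by move: hB; rewrite /= inE => /andP[].
- apply: le_trans (HF c (hasC hc)) _; rewrite ler_nat; apply: subset_leq_card.
  have hl1 : (1 <= level c)%N by rewrite hl.
  apply/subsetP => v; rewrite !inE => /andP[hF hv]; rewrite hv /fr /=.
  have := sum_eq l hc hl1 hv; rewrite /fr => ->.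
  rewrite (layer_reps (hasC hc) hv) hl /= hF /= natr_sum.
  move: hB; rewrite /= inE hc hl eqxx /= => hr.
  rewrite (bigID (fun c' => c' \in Bl level k C children r2 B l)) /=.
  apply: le_trans (_ : _ <= \sum_(i in children c | i \in Bl level k C children r2 B l)
                         (#|[set u in reps i | fr l u]|)%:R) _; last first.
    by rewrite lerDl sumr_ge0.
  apply: le_trans (_ : _ <= \sum_(i in children c | i \in Bl level k C children r2 B l)
                         (m%:R * (1 - eps))) _; last first.
    apply: ler_sum => i /andP[hi hiB].
    have [hiC hil] := children_in hc hl1 hi.
    by apply: IH => //; rewrite hil hl.
  rewrite (eq_bigl (fun i => i \in children c :&: Bl level k C children r2 B l)); last first.
    by move=> i; rewrite inE.
  rewrite sumr_const.
  set X := #|_|.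
  have -> : m%:R * (1 - eps) *+ X = X%:R * (m%:R * (1 - eps)) by rewrite [RHS]mulr_natl.
  have -> : tau = r2 * k%:R * (m%:R * (1 - eps)) by rewrite /tau !mulrA.
  by apply: ler_wpM2r => //; apply: mulr_ge0.
Qed.

Lemma part2 l : forall c, c \in C -> level c = l -> forall v, v \in reps c ->
  fr l v -> c \in Bl level k C children r1 B l.
Proof.
elim: l => [|l IH] c hc hl v hv.
- rewrite /fr /= => /and3P[_ _ /existsP[b /andP[hbB hvb]]].
  have hbC : b \in C by move: (subsetP HB b hbB); rewrite inE => /andP[].
  have e := reps_uniq (hasC hbC) (hasC hc) hvb hv; subst b.
  by rewrite !inE hbB hc hl eqxx.
- have hl1 : (1 <= level c)%N by rewrite hl.
  rewrite /fr /=. have := sum_eq l hc hl1 hv; rewrite /fr => ->.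
  case/and3P => _ _ ht.
  set X := #|children c :&: Bl level k C children r1 B l|.
  have hs : (\sum_(c' in children c) #|[set u in reps c' | fires level C children layer reps tau F B l u]| <= X * m)%N.
    rewrite /X -sum_nat_const.
    apply: (@leq_trans (\sum_(c' in children c) (if c' \in Bl level k C children r1 B l then m else 0))%N).
      apply: leq_sum => c' hc'; have [hc'C hlc'] := children_in hc hl1 hc'.
      case: ifP => hB.
      + case: HN => _ Hc _ _; rewrite -(Hc c' (hasC hc'C)); apply: subset_leq_card.
        by apply/subsetP => u; rewrite inE => /andP[].
      + rewrite leqn0 cards_eq0; apply/eqP/setP => u; rewrite !inE.
        apply/negbTE/negP => /andP[hu hf].
        have hlc : level c' = l by rewrite hlc' hl.
        by move: (IH c' hc'C hlc u hu hf); rewrite hB.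
    rewrite -big_mkcondr /=; apply/eq_leq/eq_bigl => i; by rewrite inE.
  have ht' : tau <= X%:R * m%:R by apply: le_trans ht _; rewrite -natrM ler_nat.
  rewrite inE hc hl eqxx /=.
  have h1 : r2 * (1 - eps) * k%:R <= X%:R.
    rewrite -(ler_pM2r (x := m%:R)) ?ltr0n //; apply: le_trans ht'.
    by rewrite /tau le_eqVlt; apply/orP; left; apply/eqP; ring.
  apply: le_trans h1; by apply: ler_wpM2r.
Qed.

End Pf.

Theorem theorem7p5 (R : realFieldType)
  (lmax n k : nat) (Hlmax : (0 < lmax)%N) (Hn : (0 < n)%N) (Hk : (0 < k)%N)
  (D : finType) (level : D -> nat) (HD : universal_ok level lmax n)
  (C : {set D}) (children : D -> {set D})
  (HC : is_concept_hierarchy level lmax k C children)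
  (r1 r2 eps : R)
  (Hr1 : 0 <= r1 <= 1) (Hr2 : 0 <= r2 <= 1) (Heps : 0 <= eps <= 1)
  (Hr12 : r1 <= r2 * (1 - eps))
  (m : nat) (Hm : (0 < m)%N)
  (N : finType) (layer : N -> nat) (reps : D -> {set N})
  (HN : network_ok level lmax C layer reps m)
  (F : {set N})
  (HF : forall c, has_reps level C c ->
          m%:R * (1 - eps) <= (#|reps c :\: F|)%:R) :
  let tau := r2 * k%:R * m%:R * (1 - eps) in
  forall B : {set D}, B \subset [set c in C | level c == 0%N] ->
  forall c, c \in C ->
    (c \in supp level lmax k C children r2 B ->
       m%:R * (1 - eps) <=
       (#|[set v in reps c | fires level C children layer reps tau F B (level c) v]|)%:R)
    /\
    (c \notin supp level lmax k C children r1 B ->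
       forall v, v \in reps c ->
         ~~ fires level C children layer reps tau F B (level c) v).
Proof.
move=> tau B HB c hc; split.
- case/bigcupP => -[l hl] _ hcl.
  have [e _] := @Bl_level _ _ _ _ _ _ _ _ _ _ hcl.
  rewrite e; exact: (@part1 _ _ _ _ _ _ _ HC _ _ Heps _ _ _ _ HN _ HF _ _ _ hc e hcl).
- move=> hns v hv; apply/negP => hf; move/negP: hns; apply.
  apply/bigcupP.
  have hlt : (level c < lmax.+1)%N by case: HD => H _; rewrite ltnS H.
  exists (Ordinal hlt) => //=.
  exact: (@part2 _ _ _ _ _ _ _ HC _ _ _ Hr12 _ Hm _ _ _ HN _ _ HB _ _ hc erefl _ hv hf).
Qed.
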